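(* For the ARQ protocol without feedback described in the context, the myopic policy $a_{s,t}=\mathbf{1}\{i_t=0,\ b_t\ge E_{\rm s}+E_{\rm d}\}$ (sample whenever the current packet has not yet been decoded correctly and the battery holds enough energy for both sampling and decoding) maximizes the throughput $\mathcal{T}(\Psi)=\lim_{T\to\infty}\frac1T\mathbb{E}[\sum_{t=1}^T\mathbf{1}_{S_t}]$ over all admissible policies.
   Context: System model. Time is slotted, $t=1,2,\dots$. The channel power gains $|h_t|^2$ are i.i.d. across slots with CDF $F_H$. A transmitter sends packets at fixed rate $R$ and power $p_{\rm tx}$; let $|h_{\rm th}|^2=(2^R-1)/p_{\rm tx}$ and $p_c=1-F_H(|h_{\rm th}|^2)$. Each packet may be transmitted at most $K>1$ times; $k_t\in\{0,\dots,K-1\}$ is the transmission index. The receiver harvests energy $E_{H,t}$ at the start of slot $t$, with $E_{H,t}$ i.i.d. taking values in a finite set of nonnegative integer multiples of an energy quantum $E$. Its battery level evolves as $b_{t+1}=\min\{b_t-E_{c,t}+E_{H,t+1},B_{\max}\}$, $b_1=E_{H,1}$, where $E_{c,t}$ is the energy consumed in slot $t$ and $B_{\max}<\infty$ is a multiple of $E$. Sampling costs $E_{\rm s}$ and decoding costs $E_{\rm d}$ (positive multiples of $E$). In slot $t$ the receiver chooses $a_{s,t}\in\{0,1\}$. If $a_{s,t}=1$ it consumes $E_{\rm s}$, and if $|h_t|^2\ge|h_{\rm th}|^2$ (probability $p_c$, independent of the past) it decodes the packet correctly, consuming an additional $E_{\rm d}$; otherwise nothing further is consumed. The reception state $i_t\in\{0,1\}$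 equals $1$ iff the current packet has already been decoded correctly; $S_t$ denotes the event that a packet is decoded correctly in slot $t$. System state: $\mathbf{s}_t=(b_t,k_t,i_t)$. ARQ without feedback: no acknowledgement is sent; the transmitter starts a new packet every $K$ slots ($k_{t+1}=(k_t+1)\bmod K$, and $i_{t+1}=0$ when $k_{t+1}=0$). Admissible actions: $a_{s,t}=1$ is allowed only if $i_t=0$ and $b_t\ge E_{\rm s}+E_{\rm d}$; otherwise $a_{s,t}=0$. Policies choose actions based on the system state (the limit defining throughput is assumed to exist). *)

(* Defs.v *)
(* classical reals. Energies are measured in units of the quantum E. *)
From Stdlib Require Import Reals Lra Lia Arith List Bool.
Import ListNotations.
Open Scope R_scope.

(* System state s_t = (b_t, k_t, i_t): battery (in quanta), transmission index, reception state. *)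
Definition state : Type := (nat * nat * bool)%type.

Definition policy : Type := nat -> state -> bool.

Definition admissible (Es Ed : nat) (psi : policy) : Prop :=
  forall t b k i, psi t (b, k, i) = true -> i = false /\ (Es + Ed <= b)%nat.

Definition myopic (Es Ed : nat) : policy :=
  fun _ s => match s with (b, _, i) => andb (negb i) (Nat.leb (Es + Ed) b) end.

Definition harvest_dist := list (nat * R).

Definition valid_dist (H : harvest_dist) : Prop :=
  Forall (fun ep => 0 <= snd ep) H /\ fold_right (fun ep acc => snd ep + acc) 0 H = 1.

Definition expect_h (H : harvest_dist) (g : nat -> R) : R :=
  fold_right (fun ep acc => snd ep * g (fst ep) + acc) 0 H.

(* W n t s = expected number of correct decodings in slots t, ..., t+n-1 under policy psi,
   starting from state s at the beginning of slot t (after harvesting E_{H,t}). *)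
Fixpoint W (K Es Ed Bmax : nat) (pc : R) (H : harvest_dist) (psi : policy)
    (n t : nat) (s : state) {struct n} : R :=
  match n with
  | O => 0
  | S n' =>
    match s with (b, k, i) =>
      let k' := Nat.modulo (S k) K in
      let next (bc : nat) (ic : bool) : R :=
        expect_h H (fun e =>
          W K Es Ed Bmax pc H psi n' (S t)
            (Nat.min (bc + e) Bmax, k', if Nat.eqb k' 0 then false else ic)) in
      if psi t s
      then pc * (1 + next (b - Es - Ed)%nat true) + (1 - pc) * next (b - Es)%nat i
      else next b i
    end
  end.

(* E[ sum_{t=1}^T 1_{S_t} ], with b_1 = E_{H,1} (capped at B_max), k_1 = 0, i_1 = 0. *)
Definition expected_successes (K Es Ed Bmax : nat) (pc : R) (H : harvest_dist)
    (psi : policy) (T : nat) : R :=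
  expect_h H (fun e => W K Es Ed Bmax pc H psi T 1 (Nat.min e Bmax, 0%nat, false)).

Definition avg_throughput (K Es Ed Bmax : nat) (pc : R) (H : harvest_dist)
    (psi : policy) (n : nat) : R :=
  expected_successes K Es Ed Bmax pc H psi (S n) / INR (S n).

(* Success probability p_c = 1 - F_H(|h_th|^2), |h_th|^2 = (2^R - 1)/p_tx. *)
Definition success_prob (F_H : R -> R) (Rate ptx : R) : R :=
  1 - F_H ((Rpower 2 Rate - 1) / ptx).

(* Main.v *)
Require Import Defs.
From Stdlib Require Import Reals List Lra Lia Arith Bool.
From Stdlib Require Import RiemannInt.
Open Scope R_scope.

Definition hsum (H : harvest_dist) : R := fold_right (fun ep acc => snd ep + acc) 0 H.

Lemma expect_le (H : harvest_dist) (f g : nat -> R) :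
  Forall (fun ep => 0 <= snd ep) H -> (forall e, f e <= g e) -> expect_h H f <= expect_h H g.
Proof.
  intros HF Hfg; induction H as [|[e p] H IH]; simpl; [lra|].
  inversion HF; subst. simpl in *. specialize (IH H3). specialize (Hfg e).
  assert (p * f e <= p * g e) by (apply Rmult_le_compat_l; auto). lra.
Qed.

Lemma expect_lin (H : harvest_dist) (a c : R) (f g : nat -> R) :
  expect_h H (fun e => a * (1 + f e) + c * g e) = a * (hsum H + expect_h H f) + c * expect_h H g.
Proof.
  induction H as [|[e p] H IH]; simpl in *; [ring|]. rewrite IH. unfold hsum in *. simpl. ring.
Qed.

Lemma expect_lin1 (H : harvest_dist) (a c : R) (f g : nat -> R) : hsum H = 1 ->
  a * (1 + expect_h H f) + c * expect_h H g = expect_h H (fun e => a * (1 + f e) + c * g e).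
Proof. intros Hs; rewrite expect_lin, Hs; ring. Qed.

Lemma expect_zero (H : harvest_dist) (f : nat -> R) : (forall e, f e = 0) -> expect_h H f = 0.
Proof. intros Hf; induction H as [|[e p] H IH]; simpl; [lra|]. rewrite Hf, IH; ring. Qed.

Lemma W_S K Es Ed Bmax pc H psi n t b k i :
  W K Es Ed Bmax pc H psi (S n) t (b, k, i) =
  let k' := Nat.modulo (S k) K in
  let next (bc : nat) (ic : bool) : R :=
        expect_h H (fun e =>
          W K Es Ed Bmax pc H psi n (S t)
            (Nat.min (bc + e) Bmax, k', if Nat.eqb k' 0 then false else ic)) in
  if psi t (b, k, i)
  then pc * (1 + next (b - Es - Ed)%nat true) + (1 - pc) * next (b - Es)%nat i
  else next b i.
Proof. reflexivity. Qed.

Definition inv K Es Ed Bmax pc H n :=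
  forall t,
  (forall b b' k i, (b <= b')%nat -> W K Es Ed Bmax pc H (myopic Es Ed) n t (b,k,i) <=
                                     W K Es Ed Bmax pc H (myopic Es Ed) n t (b',k,i)) /\
  (forall b k, W K Es Ed Bmax pc H (myopic Es Ed) n t (b,k,true) <=
               W K Es Ed Bmax pc H (myopic Es Ed) n t (b,k,false)) /\
  (forall b k, (Es + Ed <= b)%nat ->
     W K Es Ed Bmax pc H (myopic Es Ed) n t (b,k,false) <=
     pc * (1 + W K Es Ed Bmax pc H (myopic Es Ed) n t (b - Es - Ed,k,true)%nat)
     + (1 - pc) * W K Es Ed Bmax pc H (myopic Es Ed) n t (b - Es,k,false)%nat).

Lemma zero_small K Es Ed Bmax pc H n : (Bmax < Es + Ed)%nat ->
  forall t b k i, (b <= Bmax)%nat -> W K Es Ed Bmax pc H (myopic Es Ed) n t (b,k,i) = 0.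
Proof.
  intros HB; induction n as [|n IH]; intros t b k i Hb; [reflexivity|].
  rewrite W_S. simpl myopic.
  replace (Nat.leb (Es+Ed) b) with false by (symmetry; apply Nat.leb_gt; lia).
  rewrite andb_false_r. apply expect_zero. intros e. apply IH. lia.
Qed.

Lemma KI K Es Ed Bmax pc H n t (HH : valid_dist H) (Hpc : 0 <= pc <= 1)
  (I : inv K Es Ed Bmax pc H n) :
  forall b kk, (Es + Ed <= b)%nat ->
  expect_h H (fun e => W K Es Ed Bmax pc H (myopic Es Ed) n (S t)
                 (Nat.min (b + e) Bmax, kk, if Nat.eqb kk 0 then false else false)) <=
  pc * (1 + expect_h H (fun e => W K Es Ed Bmax pc H (myopic Es Ed) n (S t)
                 (Nat.min (b - Es - Ed + e) Bmax, kk, if Nat.eqb kk 0 then false else true)))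
  + (1 - pc) * expect_h H (fun e => W K Es Ed Bmax pc H (myopic Es Ed) n (S t)
                 (Nat.min (b - Es + e) Bmax, kk, if Nat.eqb kk 0 then false else false)).
Proof.
  intros b kk Hb. destruct HH as [Hnn Hs].
  replace (if Nat.eqb kk 0 then false else false) with false by (destruct (Nat.eqb kk 0); auto).
  destruct (Nat.lt_ge_cases Bmax (Es + Ed)) as [HB|HB].
  - rewrite !(expect_zero H (fun e => W _ _ _ _ _ _ _ _ _ _)); try (intros e; apply zero_small; lia). clear -Hpc. lra.
  - destruct (I (S t)) as [P1 [P2 Q1]].
    rewrite expect_lin1 by exact Hs.
    apply expect_le; auto. intros e.
    set (x := Nat.min (b + e) Bmax).
    eapply Rle_trans; [apply Q1; unfold x; lia|].
    assert (A1 : W K Es Ed Bmax pc H (myopic Es Ed) n (S t) (x - Es - Ed, kk, true)%nat <=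
      W K Es Ed Bmax pc H (myopic Es Ed) n (S t)
        (Nat.min (b - Es - Ed + e) Bmax, kk, if Nat.eqb kk 0 then false else true)).
    { destruct (Nat.eqb kk 0).
      - eapply Rle_trans; [apply P2|]. apply P1. unfold x; lia.
      - apply P1. unfold x; lia. }
    assert (A2 : W K Es Ed Bmax pc H (myopic Es Ed) n (S t) (x - Es, kk, false)%nat <=
      W K Es Ed Bmax pc H (myopic Es Ed) n (S t) (Nat.min (b - Es + e) Bmax, kk, false)).
    { apply P1. unfold x; lia. }
    apply Rplus_le_compat; apply Rmult_le_compat_l; lra.
Qed.

Lemma N_mono K Es Ed Bmax pc H n t (HH : valid_dist H) (I : inv K Es Ed Bmax pc H n) :
  forall b b' kk ic, (b <= b')%nat ->
  expect_h H (fun e => W K Es Ed Bmax pc H (myopic Es Ed) n (S t)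
                 (Nat.min (b + e) Bmax, kk, if Nat.eqb kk 0 then false else ic)) <=
  expect_h H (fun e => W K Es Ed Bmax pc H (myopic Es Ed) n (S t)
                 (Nat.min (b' + e) Bmax, kk, if Nat.eqb kk 0 then false else ic)).
Proof.
  intros b b' kk ic Hle. apply expect_le; [apply HH|]. intros e.
  destruct (I (S t)) as [P1 _]. apply P1. lia.
Qed.

Lemma GE K Es Ed Bmax pc H n t (HH : valid_dist H) (Hpc : 0 <= pc <= 1)
  (I : inv K Es Ed Bmax pc H n) : forall b k,
  expect_h H (fun e => W K Es Ed Bmax pc H (myopic Es Ed) n (S t)
                 (Nat.min (b + e) Bmax, Nat.modulo (S k) K,
                  if Nat.eqb (Nat.modulo (S k) K) 0 then false else false)) <=
  W K Es Ed Bmax pc H (myopic Es Ed) (S n) t (b, k, false).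
Proof.
  intros b k. rewrite W_S. cbv beta zeta.
  change (myopic Es Ed t (b,k,false)) with (Nat.leb (Es+Ed) b).
  destruct (Nat.leb_spec (Es+Ed) b) as [Hb|Hb]; [|lra].
  apply KI; auto.
Qed.

Lemma inv_S K Es Ed Bmax pc H n (HH : valid_dist H) (Hpc : 0 <= pc <= 1) :
  inv K Es Ed Bmax pc H n -> inv K Es Ed Bmax pc H (S n).
Proof.
  intros I t.
  assert (Hstep : forall b k i, W K Es Ed Bmax pc H (myopic Es Ed) (S n) t (b,k,i) <=
                                W K Es Ed Bmax pc H (myopic Es Ed) (S n) t (S b,k,i)).
  { intros b k [|].
    - rewrite !W_S. cbv beta zeta.
      change (myopic Es Ed t (b,k,true)) with false.
      change (myopic Es Ed t (S b,k,true)) with false.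
      apply N_mono; auto.
    - destruct (Nat.leb_spec (Es+Ed) b) as [Hb|Hb].
      + rewrite !W_S. cbv beta zeta.
        change (myopic Es Ed t (b,k,false)) with (Nat.leb (Es+Ed) b).
        change (myopic Es Ed t (S b,k,false)) with (Nat.leb (Es+Ed) (S b)).
        replace (Nat.leb (Es+Ed) b) with true by (symmetry; apply Nat.leb_le; lia).
        replace (Nat.leb (Es+Ed) (S b)) with true by (symmetry; apply Nat.leb_le; lia).
        apply Rplus_le_compat; apply Rmult_le_compat_l; try lra.
        * apply Rplus_le_compat_l. apply N_mono; auto; lia.
        * apply N_mono; auto; lia.
      + eapply Rle_trans; [|apply GE; auto].
        rewrite W_S. cbv beta zeta.
        change (myopic Es Ed t (b,k,false)) with (Nat.leb (Es+Ed) b).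
        replace (Nat.leb (Es+Ed) b) with false by (symmetry; apply Nat.leb_gt; lia).
        apply N_mono; auto. }
  split; [|split].
  - intros b b' k i Hle. induction Hle; [lra|]. eapply Rle_trans; [apply IHHle|apply Hstep].
  - intros b k. eapply Rle_trans; [|apply GE; auto].
    rewrite W_S. cbv beta zeta.
    change (myopic Es Ed t (b,k,true)) with false.
    apply expect_le; [apply HH|]. intros e.
    destruct (I (S t)) as [_ [P2 _]].
    destruct (Nat.eqb (Nat.modulo (S k) K) 0); [lra|apply P2].
  - intros b k Hb.
    rewrite (W_S _ _ _ _ _ _ _ _ _ b). cbv beta zeta.
    change (myopic Es Ed t (b,k,false)) with (Nat.leb (Es+Ed) b).
    replace (Nat.leb (Es+Ed) b) with true by (symmetry; apply Nat.leb_le; lia).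
    apply Rplus_le_compat; apply Rmult_le_compat_l; try lra.
    + apply Rplus_le_compat_l. rewrite W_S. cbv beta zeta.
      change (myopic Es Ed t ((b - Es - Ed)%nat,k,true)) with false. lra.
    + apply GE; auto.
Qed.

Lemma inv_all K Es Ed Bmax pc H (HH : valid_dist H) (Hpc : 0 <= pc <= 1) :
  forall n, inv K Es Ed Bmax pc H n.
Proof.
  induction n as [|n IH]; [|apply inv_S; auto].
  intros t; simpl; repeat split; intros; try lra.
Qed.

Lemma opt K Es Ed Bmax pc H (HH : valid_dist H) (Hpc : 0 <= pc <= 1) psi
  (Hpsi : admissible Es Ed psi) :
  forall n t s, W K Es Ed Bmax pc H psi n t s <= W K Es Ed Bmax pc H (myopic Es Ed) n t s.
Proof.
  induction n as [|n IH]; intros t [[b k] i]; [simpl; lra|].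
  rewrite !W_S. cbv beta zeta.
  destruct (psi t (b,k,i)) eqn:Ep.
  - destruct (Hpsi _ _ _ _ Ep) as [-> Hb].
    change (myopic Es Ed t (b,k,false)) with (Nat.leb (Es+Ed) b).
    replace (Nat.leb (Es+Ed) b) with true by (symmetry; apply Nat.leb_le; lia).
    apply Rplus_le_compat; apply Rmult_le_compat_l; try lra.
    + apply Rplus_le_compat_l. apply expect_le; [apply HH|]. intros; apply IH.
    + apply expect_le; [apply HH|]. intros; apply IH.
  - eapply Rle_trans.
    { apply expect_le; [apply HH|]. intros; apply IH. }
    destruct i.
    + change (myopic Es Ed t (b,k,true)) with false. lra.
    + pose proof (GE K Es Ed Bmax pc H n t HH Hpc (inv_all K Es Ed Bmax pc H HH Hpc n) b k) as G.
      rewrite W_S in G. cbv beta zeta in G. exact G.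
Qed.

Theorem proposition1
  (F_H : R -> R) (Rate ptx : R) (K Es Ed Bmax : nat) (H : harvest_dist)
  (HF_mono : forall x y, x <= y -> F_H x <= F_H y)
  (HF_range : forall x, 0 <= F_H x <= 1)
  (HRate : 0 < Rate) (Hptx : 0 < ptx)
  (HK : (1 < K)%nat) (HEs : (1 <= Es)%nat) (HEd : (1 <= Ed)%nat)
  (HH : valid_dist H)
  (psi : policy) (Hpsi : admissible Es Ed psi)
  (Lpsi Lmy : R)
  (Hlim_psi : Un_cv (avg_throughput K Es Ed Bmax (success_prob F_H Rate ptx) H psi) Lpsi)
  (Hlim_my : Un_cv (avg_throughput K Es Ed Bmax (success_prob F_H Rate ptx) H (myopic Es Ed)) Lmy) :
  Lpsi <= Lmy.
Proof.
  assert (Hpc : 0 <= success_prob F_H Rate ptx <= 1).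
  { unfold success_prob. pose proof (HF_range ((Rpower 2 Rate - 1) / ptx)). lra. }
  refine (Rle_cv_lim _ Hlim_psi Hlim_my).
  intros n. unfold avg_throughput.
  unfold Rdiv. apply Rmult_le_compat_r.
  - left. apply Rinv_0_lt_compat. apply lt_0_INR. lia.
  - unfold expected_successes. apply expect_le; [apply HH|]. intros e. apply opt; auto.
Qed.
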